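(* The graph $H_7$ has rank cardinality vector $(2,2,2,1)$, and every graph whose rank cardinality vector is $(2,2,2,1)$ is isomorphic to $H_7$.
   Context: All graphs are finite, nonempty, and reflexive (every vertex has a loop). $N[v]$ is the closed neighborhood of $v$ (including $v$). For distinct $v,w$, $w$ strictly corners $v$ if $N[v]\subsetneq N[w]$; $v$ is then a strict corner. Corner ranking: set $G^{(1)}=G$, $k=1$. If $G^{(k)}$ is a clique, give all its vertices rank $k$ and stop. Else if $G^{(k)}$ has no strict corners, give all its vertices rank $\infty$ and stop. Else give every strict corner of $G^{(k)}$ rank $k$, delete them to get $G^{(k+1)}$ (induced subgraph), increase $k$ and repeat. The corner rank is the largest rank of a vertex; $X_k$ is the set of rank-$k$ vertices. The rank cardinality vector of a graph of finite corner rank $\alpha$ is $(x_\alpha,\dots,x_1)$ with $x_k=|X_k|$. $H_7$ is the graph on vertices $a_1,a_2,b_1,b_2,c_1,c_2,d$ with edges $a_1a_2,a_1b_1,a_1b_2,a_2b_1,a_2b_2,a_2c_1,a_1c_2,b_1c_1,b_1c_2,b_1d,b_2c_1,b_2c_2,c_1d,c_2d$. *)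

(* Defs.v *)
From HB Require Import structures.
From mathcomp Require Import all_boot.
Set Implicit Arguments. Unset Strict Implicit. Unset Printing Implicit Defensive.

(* A graph is a finite type T of vertices with an adjacency relation e : rel T,
   assumed symmetric and reflexive (every vertex has a loop); hypotheses are
   stated in the theorem. *)
Section CornerRanking.
Variables (T : finType) (e : rel T).

Definition nbhd (S : {set T}) (v : T) : {set T} := [set w in S | e v w].

Definition strict_corner (S : {set T}) (v : T) : bool :=
  (v \in S) && [exists w in S, (w != v) && (nbhd S v \proper nbhd S w)].

Definition corners (S : {set T}) : {set T} := [set v | strict_corner S v].

Definition is_clique (S : {set T}) : bool :=
  [forall v in S, forall w in S, e v w].

(* one step of the ranking process (the clique case stops the process) *)
Definition rank_step (S : {set T}) : {set T} :=
  if is_clique S then set0 else S :\: corners S.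

(* Gk k = G^(k) for k >= 1 (Gk 1 = the whole vertex set) *)
Definition Gk (k : nat) : {set T} := iter k.-1 rank_step [set: T].

(* X_k = the set of vertices of rank k (k >= 1, finite ranks) *)
Definition Xk (k : nat) : {set T} :=
  if is_clique (Gk k) then Gk k else corners (Gk k).

Definition corner_rank_is (alpha : nat) : Prop :=
  [/\ 0 < alpha, Gk alpha != set0, is_clique (Gk alpha) &
      forall k, 0 < k < alpha -> ~~ is_clique (Gk k) /\ corners (Gk k) != set0].

Definition rank_card_vector (v : seq nat) : Prop :=
  exists alpha, corner_rank_is alpha /\
    v = [seq #|Xk k| | k <- rev (iota 1 alpha)].

End CornerRanking.

Definition graph_iso (T1 T2 : finType) (e1 : rel T1) (e2 : rel T2) : Prop :=
  exists f : T1 -> T2, bijective f /\ forall x y, e1 x y = e2 (f x) (f y).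

Inductive H7v := a1 | a2 | b1 | b2 | c1 | c2 | d.

Definition H7v_to (x : H7v) : 'I_7 :=
  match x with
  | a1 => inord 0 | a2 => inord 1 | b1 => inord 2 | b2 => inord 3
  | c1 => inord 4 | c2 => inord 5 | d => inord 6 end.
Definition H7v_of (i : 'I_7) : H7v :=
  match val i with
  | 0 => a1 | 1 => a2 | 2 => b1 | 3 => b2 | 4 => c1 | 5 => c2 | _ => d end.
Lemma H7v_toK : cancel H7v_to H7v_of.
Proof. by case; rewrite /H7v_of /= inordK. Qed.

HB.instance Definition _ := Finite.copy H7v (can_type H7v_toK).

Definition H7_edges : seq (H7v * H7v) :=
  [:: (a1,a2); (a1,b1); (a1,b2); (a2,b1); (a2,b2); (a2,c1); (a1,c2);
      (b1,c1); (b1,c2); (b1,d); (b2,c1); (b2,c2); (c1,d); (c2,d)].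

Definition H7_adj : rel H7v := fun x y =>
  (x == y) || ((x, y) \in H7_edges) || ((y, x) \in H7_edges).

(* Main.v *)
Require Import Defs.
From HB Require Import structures.
From mathcomp Require Import all_boot.
Set Implicit Arguments. Unset Strict Implicit. Unset Printing Implicit Defensive.

Definition code (v : H7v) : nat :=
  match v with a1 => 0 | a2 => 1 | b1 => 2 | b2 => 3 | c1 => 4 | c2 => 5 | d => 6 end.
Definition L7 : seq H7v := [:: a1;a2;b1;b2;c1;c2;d].
Arguments L7 : simpl never.
Definition lev (v : H7v) : nat :=
  match v with a1 | a2 => 4 | b1 | b2 => 3 | c1 | c2 => 2 | d => 1 end.
Definition cornerc (r : rel H7v) (P : pred H7v) (v : H7v) : bool :=
  P v && has (fun w => P w && (code w != code v) && all (fun x => (P x && r v x) ==> r w x) L7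
                       && has (fun x => P x && r w x && ~~ r v x) L7) L7.
Definition condk (r : rel H7v) (k : nat) : bool :=
  all (fun v => (k <= lev v) ==> ((lev v == k) == cornerc r (fun x => k <= lev x) v)) L7.
Definition E7 : seq (H7v * H7v) :=
  [:: (a1,a2); (a1,b1); (a1,b2); (a2,b1); (a2,b2); (b1,b2);
      (a1,c1); (a1,c2); (a2,c1); (a2,c2); (b1,c1); (b1,c2); (b2,c1); (b2,c2); (c1,c2);
      (a1,d); (a2,d); (b1,d); (b2,d); (c1,d); (c2,d)].
Definition eix (u v : H7v) : nat := match u, v with
  | a1, a1 => 0
  | a1, a2 => 1
  | a1, b1 => 2
  | a1, b2 => 3
  | a1, c1 => 7
  | a1, c2 => 8
  | a1, d => 16
  | a2, a1 => 1
  | a2, a2 => 0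
  | a2, b1 => 4
  | a2, b2 => 5
  | a2, c1 => 9
  | a2, c2 => 10
  | a2, d => 17
  | b1, a1 => 2
  | b1, a2 => 4
  | b1, b1 => 0
  | b1, b2 => 6
  | b1, c1 => 11
  | b1, c2 => 12
  | b1, d => 18
  | b2, a1 => 3
  | b2, a2 => 5
  | b2, b1 => 6
  | b2, b2 => 0
  | b2, c1 => 13
  | b2, c2 => 14
  | b2, d => 19
  | c1, a1 => 7
  | c1, a2 => 9
  | c1, b1 => 11
  | c1, b2 => 13
  | c1, c1 => 0
  | c1, c2 => 15
  | c1, d => 20
  | c2, a1 => 8
  | c2, a2 => 10
  | c2, b1 => 12
  | c2, b2 => 14
  | c2, c1 => 15
  | c2, c2 => 0
  | c2, d => 21
  | d, a1 => 16
  | d, a2 => 17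
  | d, b1 => 18
  | d, b2 => 19
  | d, c1 => 20
  | d, c2 => 21
  | d, d => 0
  end.
Definition mkrel (bs : seq bool) : rel H7v := fun u v => nth false (true :: bs) (eix u v).
Definition H7c (u v : H7v) : bool := (code u == code v) ||
  has (fun p : H7v * H7v => ((code p.1 == code u) && (code p.2 == code v))
                          || ((code p.1 == code v) && (code p.2 == code u))) H7_edges.
Definition sw (s : bool * bool * bool) (v : H7v) : H7v := match v with
 | a1 => if s.1.1 then a2 else a1 | a2 => if s.1.1 then a1 else a2
 | b1 => if s.1.2 then b2 else b1 | b2 => if s.1.2 then b1 else b2
 | c1 => if s.2 then c2 else c1 | c2 => if s.2 then c1 else c2 | d => d end.
Definition S8 : seq (bool * bool * bool) :=
  [:: (false,false,false);(false,false,true);(false,true,false);(false,true,true);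
      (true,false,false);(true,false,true);(true,true,false);(true,true,true)].
Definition isoc (r : rel H7v) : bool :=
  has (fun s => all (fun u => all (fun v => r u v == H7c (sw s u) (sw s v)) L7) L7) S8.
Fixpoint allb (n : nat) (k : seq bool -> bool) : bool :=
  if n is m.+1 then allb m (fun s => k (true :: s)) && allb m (fun s => k (false :: s))
  else k [::].
Definition check : bool :=
  allb 6 (fun B3 => if mkrel (B3 ++ nseq 15 false) a1 a2 && condk (mkrel (B3 ++ nseq 15 false)) 3 then
  allb 9 (fun B2 => if condk (mkrel (B3 ++ B2 ++ nseq 6 false)) 2 then
  allb 6 (fun B1 => if condk (mkrel (B3 ++ B2 ++ B1)) 1 then isoc (mkrel (B3 ++ B2 ++ B1)) else true) else true) else true).

Lemma check_true : check.
Proof. by vm_compute. Qed.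

Lemma allbP n k : allb n k -> forall s, size s = n -> k s.
Proof.
elim: n k => [|n IH] k /=; first by move=> H [|].
move=> /andP[H1 H2] [|b s] //= [Hs]; case: b; [exact: (IH _ H1 _ Hs)|exact: (IH _ H2 _ Hs)].
Qed.

Lemma cornerc_local (r r' : rel H7v) (P : pred H7v) v :
  (forall x y, P x -> P y -> r x y = r' x y) -> cornerc r P v = cornerc r' P v.
Proof.
move=> H; rewrite /cornerc; case Pv: (P v); last by [].
rewrite !andTb; apply: eq_in_has => w _; case Pw: (P w); last by [].
rewrite !andTb; congr (_ && _ && _).
- by apply: eq_in_all => x _; case Px: (P x); rewrite ?andTb ?andFb // !H.
- by apply: eq_in_has => x _; case Px: (P x); rewrite ?andTb ?andFb // !H.
Qed.

Lemma condk_local (r r' : rel H7v) k :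
  (forall x y, k <= lev x -> k <= lev y -> r x y = r' x y) -> condk r k = condk r' k.
Proof.
move=> H; apply: eq_in_all => v _.
by rewrite (@cornerc_local r r' (fun x => k <= lev x) v H).
Qed.

Lemma mkrel_cat s X Y u v : eix u v <= size s -> mkrel (s ++ X) u v = mkrel (s ++ Y) u v.
Proof. by rewrite /mkrel; case: (eix u v) => [|i] //= Hi; rewrite !nth_cat Hi. Qed.

Lemma eix3 u v : 3 <= lev u -> 3 <= lev v -> eix u v <= 6.
Proof. by case: u; case: v. Qed.
Lemma eix2 u v : 2 <= lev u -> 2 <= lev v -> eix u v <= 15.
Proof. by case: u; case: v. Qed.

Lemma isoc_ext (r r' : rel H7v) : r =2 r' -> isoc r = isoc r'.
Proof.
move=> H; apply: eq_in_has => s _; apply: eq_in_all => u _; apply: eq_in_all => v _; by rewrite H.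
Qed.

Lemma comp (r : rel H7v) : reflexive r -> symmetric r -> r a1 a2 ->
  condk r 3 -> condk r 2 -> condk r 1 -> isoc r.
Proof.
move=> rr rs r12 h3 h2 h1.
pose bs := [seq r p.1 p.2 | p <- E7].
have Er : forall u v, r u v = mkrel bs u v.
  by move=> u v; case: u; case: v; rewrite /mkrel /= ?rr // rs.
have sz : size bs = 21 by rewrite size_map.
pose B3 := take 6 bs. pose B2 := take 9 (drop 6 bs). pose B1 := drop 9 (drop 6 bs).
have Ebs : bs = B3 ++ B2 ++ B1 by rewrite /B3 /B2 /B1 !cat_take_drop.
have s3 : size B3 = 6 by rewrite size_take sz.
have s2 : size B2 = 9 by rewrite size_take size_drop sz.
have s1 : size B1 = 6 by rewrite !size_drop sz.
have := allbP check_true s3.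
have -> : mkrel (B3 ++ nseq 15 false) a1 a2 = r a1 a2.
  by rewrite Er Ebs (@mkrel_cat B3 _ (B2 ++ B1)) // s3.
have -> : condk (mkrel (B3 ++ nseq 15 false)) 3 = condk r 3.
  apply: condk_local => x y hx hy; rewrite Er Ebs (@mkrel_cat B3 _ (B2 ++ B1)) // s3.
  exact: eix3.
rewrite r12 h3 => /allbP /(_ _ s2).
have -> : condk (mkrel (B3 ++ B2 ++ nseq 6 false)) 2 = condk r 2.
  apply: condk_local => x y hx hy; rewrite Er Ebs !catA (@mkrel_cat (B3 ++ B2) _ B1) //.
  by rewrite size_cat s3 s2; exact: eix2.
rewrite h2 => /allbP /(_ _ s1).
have Er' : r =2 mkrel (B3 ++ B2 ++ B1) by move=> x y; rewrite Er Ebs.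
rewrite -(condk_local (r := r)) ?h1; last by move=> x y _ _; rewrite Er'.
by rewrite -(isoc_ext Er').
Qed.

Lemma h7eqE (u v : H7v) : (u == v) = (code u == code v).
Proof. by apply/eqP/eqP => [->//|]; case: u; case: v. Qed.

Lemma H7_adjE u v : H7_adj u v = H7c u v.
Proof.
rewrite /H7_adj /H7c /H7_edges !in_cons !xpair_eqE !h7eqE in_nil.
by case: u; case: v.
Qed.

Lemma mem_L7 u : u \in L7.
Proof. by rewrite /L7 !in_cons !h7eqE; case: u. Qed.

Lemma sw_inv s : involutive (sw s).
Proof. by case: s => [[p q] t] u; case: p; case: q; case: t; case: u. Qed.

Lemma lev_range u : 0 < lev u <= 4.
Proof. by case: u. Qed.

Lemma strict_corner_trans (T : finType) (e : rel T) (f : H7v -> T)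
  (finj : injective f) (fsurj : forall t, exists u, f u = t)
  (S : {set T}) (P : pred H7v) (HP : forall u, (f u \in S) = P u) (v : H7v) :
  strict_corner e S (f v) = cornerc (fun x y => e (f x) (f y)) P v.
Proof.
have sub : forall a b, (nbhd e S (f a) \subset nbhd e S (f b)) =
    all (fun x => (P x && e (f a) (f x)) ==> e (f b) (f x)) L7.
  move=> a b; apply/subsetP/allP.
  - move=> H x _; apply/implyP => /andP[Px Hax].
    have : f x \in nbhd e S (f a) by rewrite inE HP Px.
    by move/H; rewrite inE => /andP[_].
  - move=> H t; case: (fsurj t) => x <-; rewrite !inE HP => /andP[Px Hax].
    by rewrite Px (implyP (H x (mem_L7 x))) // Px Hax.
have key : forall x, ((f x \in S) && ((f x != f v) && (nbhd e S (f v) \proper nbhd e S (f x))))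
   = (P x && (code x != code v) && all (fun y => (P y && e (f v) (f y)) ==> e (f x) (f y)) L7
          && has (fun y => P y && e (f x) (f y) && ~~ e (f v) (f y)) L7).
  move=> x; rewrite HP (inj_eq finj) h7eqE properE !sub -has_predC.
  have -> : has (predC (fun y => (P y && e (f x) (f y)) ==> e (f v) (f y))) L7 =
            has (fun y => P y && e (f x) (f y) && ~~ e (f v) (f y)) L7.
    by apply: eq_in_has => y _ /=; rewrite negb_imply.
  by rewrite !andbA.
rewrite /strict_corner /cornerc HP; congr (_ && _).
apply/existsP/hasP => [[w]|[x _]].
- by case: (fsurj w) => x <-; rewrite key => H; exists x; [exact: mem_L7|].
- by rewrite -key => H; exists (f x).
Qed.

Lemma cornersS (T : finType) (e : rel T) (S : {set T}) t : t \in corners e S -> t \in S.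
Proof. by rewrite inE /strict_corner => /andP[]. Qed.

Lemma rank_step_sub (T : finType) (e : rel T) (S : {set T}) : rank_step e S \subset S.
Proof. by rewrite /rank_step; case: ifP => _; [exact: sub0set|exact: subsetDl]. Qed.

Lemma Gk_mono (T : finType) (e : rel T) i j : 0 < i <= j -> Gk e j \subset Gk e i.
Proof.
move=> /andP[i0 ij]; elim: j ij => [|j IH]; first by rewrite leqn0 => /eqP ->.
rewrite leq_eqVlt => /orP[/eqP -> //|]; rewrite ltnS => ij.
apply: subset_trans (IH ij).
have j0 : 0 < j by apply: leq_trans ij.
case: j j0 {IH ij} => // j _.
exact: rank_step_sub.
Qed.

Lemma part2 (T : finType) (e : rel T) : reflexive e -> symmetric e ->
  rank_card_vector e [:: 2; 2; 2; 1] -> graph_iso e H7_adj.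
Proof.
move=> er es [al [[al0 Gne cl4 Hk] Hv]].
have al4 : al = 4.
  by move/(congr1 size): Hv; rewrite size_map size_rev size_iota.
subst al.
have eG : forall k, 0 < k < 4 -> Gk e k.+1 = Gk e k :\: corners e (Gk e k).
  move=> [|k] // hk.
  have -> : Gk e k.+2 = rank_step e (Gk e k.+1) by [].
  by have [nc _] := Hk _ hk; rewrite /rank_step (negbTE nc).
have eX : forall k, 0 < k < 4 -> Xk e k = corners e (Gk e k).
  by move=> k hk; have [nc _] := Hk _ hk; rewrite /Xk (negbTE nc).
have eX4 : Xk e 4 = Gk e 4 by rewrite /Xk cl4.
move: Hv; rewrite (_ : rev (iota 1 4) = [:: 4; 3; 2; 1]) // => -[h4 h3 h2 h1].
move: h4; rewrite eX4 => /esym/eqP/cards2P [w1 [w2 [nw Hw]]].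
move: h3; rewrite eX // => /esym/eqP/cards2P [z1 [z2 [nz Hz]]].
move: h2; rewrite eX // => /esym/eqP/cards2P [y1 [y2 [ny Hy]]].
move: h1; rewrite eX // => /esym/eqP/cards1P [x Hx].
pose f u := match u with a1 => w1 | a2 => w2 | b1 => z1 | b2 => z2 | c1 => y1 | c2 => y2 | d => x end.
have Hlev : forall u, f u \in Gk e (lev u).
  case; try (by rewrite Hw ?set21 ?set22);
  by apply: (@cornersS _ e); rewrite ?Hz ?Hy ?Hx ?set21 ?set22 ?set11.
have Hout : forall u, lev u < 4 -> f u \notin Gk e (lev u).+1.
  by case => hu; try discriminate; rewrite eG // inE negb_and negbK ?Hz ?Hy ?Hx ?set21 ?set22 ?set11.
have memf : forall u k, 0 < k <= 4 -> (f u \in Gk e k) = (k <= lev u).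
  move=> u k /andP[k0 k4]; case: (leqP k (lev u)) => kl.
  - by apply: (subsetP (@Gk_mono T e k (lev u) _) _ (Hlev u)); rewrite k0 kl.
  - apply/negbTE; apply: contra (Hout u (leq_trans kl k4)).
    by apply: (subsetP (@Gk_mono T e (lev u).+1 k _)); rewrite ltn0Sn kl.
have fsurj : forall t, exists u, f u = t.
  move=> t.
  have out : forall k, 0 < k < 4 -> t \in Gk e k -> t \notin Gk e k.+1 -> t \in corners e (Gk e k).
    by move=> k hk tin; rewrite eG // inE tin andbT negbK.
  have t1 : t \in Gk e 1 := in_setT t.
  case t2: (t \in Gk e 2); last first.
    by have := out 1 isT t1 (negbT t2); rewrite Hx inE => /eqP ->; exists d.
  case t3: (t \in Gk e 3); last first.
    by have := out 2 isT t2 (negbT t3); rewrite Hy !inE => /orP[] /eqP ->; [exists c1|exists c2].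
  case t4: (t \in Gk e 4); last first.
    by have := out 3 isT t3 (negbT t4); rewrite Hz !inE => /orP[] /eqP ->; [exists b1|exists b2].
  by move: t4; rewrite Hw !inE => /orP[] /eqP ->; [exists a1|exists a2].
have finj : injective f.
  move=> u v E.
  have h1 : lev v <= lev u by rewrite -(memf u _ (lev_range v)) E memf ?lev_range.
  have h2 : lev u <= lev v by rewrite -(memf v _ (lev_range u)) -E memf ?lev_range.
  have L : lev u == lev v by rewrite eqn_leq h1 h2.
  clear h1 h2; move: E L; case: u; case: v => E L; try discriminate; try reflexivity.
  all: try (move: E => /= E; first [by rewrite E eqxx in nw | by rewrite E eqxx in nz | by rewrite E eqxx in ny]).
pose g t := if [pick u | f u == t] is Some u then u else a1.
have fg : cancel g f.
  move=> t; rewrite /g; case: pickP => [u /eqP //|H].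
  by case: (fsurj t) => u Hu; move: (H u); rewrite Hu eqxx.
have gf : cancel f g by move=> u; apply: finj; rewrite fg.
pose r u v := e (f u) (f v).
have cond : forall k, 0 < k < 4 -> condk r k.
  move=> k hk; apply/allP => v _; apply/implyP => kv.
  have hk' : 0 < k <= 4 by case/andP: hk => -> /ltnW.
  have HP : forall u, (f u \in Gk e k) = (k <= lev u) by move=> u; apply: memf.
  rewrite -(@strict_corner_trans T e f finj fsurj (Gk e k) (fun x => k <= lev x) HP v).
  have -> : strict_corner e (Gk e k) (f v) = (f v \in corners e (Gk e k)) by rewrite inE.
  have : (f v \in Gk e k.+1) = (k.+1 <= lev v) by apply: memf; case/andP: hk => _ ->.
  rewrite eG // inE HP kv andbT => H.
  by rewrite -[f v \in corners _ _]negbK H eqn_leq kv andbT leqNgt.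
have r12 : r a1 a2.
  by move: cl4; rewrite /is_clique => /forall_inP /(_ _ (Hlev a1)) /forall_inP /(_ _ (Hlev a2)).
have := @comp r (fun u => er _) (fun u v => es _ _) r12 (cond 3 isT) (cond 2 isT) (cond 1 isT).
case/hasP => s _ /allP Hs.
exists (fun t => sw s (g t)); split.
  by exists (fun u => f (sw s u)) => t /=; [rewrite sw_inv fg | rewrite gf sw_inv].
move=> t1 t2; rewrite H7_adjE.
move: (Hs (g t1) (mem_L7 _)) => /allP /(_ (g t2) (mem_L7 _)) /eqP <-.
by rewrite /r !fg.
Qed.

Lemma condH7 k : 0 < k < 4 -> condk H7c k.
Proof. by case: k => [|[|[|[|]]]] //; vm_compute. Qed.

Lemma step k : 0 < k < 4 -> (forall u, (u \in Gk H7_adj k) = (k <= lev u)) ->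
  [/\ forall u, (u \in corners H7_adj (Gk H7_adj k)) = (lev u == k),
      ~~ is_clique H7_adj (Gk H7_adj k) &
      forall u, (u \in Gk H7_adj k.+1) = (k < lev u)].
Proof.
move=> hk HP.
have cor : forall u, (u \in corners H7_adj (Gk H7_adj k)) = (lev u == k).
  move=> u; rewrite inE.
  have := @strict_corner_trans H7v H7_adj id (@inj_id _) (fun t => ex_intro _ t erefl)
     (Gk H7_adj k) (fun x => k <= lev x) HP u.
  move=> ->; rewrite (@cornerc_local _ H7c) => [|x y _ _]; last exact: H7_adjE.
  case ku: (k <= lev u); last first.
    by rewrite /cornerc ku; apply/esym/negbTE; apply: contraFN ku => /eqP ->.
  by move/allP: (condH7 hk) => /(_ u (mem_L7 u)); rewrite ku => /eqP ->.
have ncl : ~~ is_clique H7_adj (Gk H7_adj k).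
  have k3 : k <= 3 by case/andP: hk.
  have F : H7c b1 b2 = false by vm_compute.
  apply/negP => /forall_inP /(_ b1); rewrite HP k3 => /(_ isT) /forall_inP /(_ b2).
  by rewrite HP k3 H7_adjE F => /(_ isT).
split=> // u.
have -> : Gk H7_adj k.+1 = rank_step H7_adj (Gk H7_adj k) by clear -hk; case: k hk.
by rewrite /rank_step (negbTE ncl) inE cor HP ltn_neqAle eq_sym.
Qed.

Lemma part1 : rank_card_vector H7_adj [:: 2; 2; 2; 1].
Proof.
have G1 : forall u, (u \in Gk H7_adj 1) = (1 <= lev u) by move=> u; have -> : Gk H7_adj 1 = [set: H7v] by []; rewrite in_setT; case: u.
have [C1 N1 G2] := @step 1 isT G1.
have [C2 N2 G3] := @step 2 isT G2.
have [C3 N3 G4] := @step 3 isT G3.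
have cl4 : is_clique H7_adj (Gk H7_adj 4).
  have A : all (fun u => all (fun v => (3 < lev u) ==> (3 < lev v) ==> H7c u v) L7) L7 by vm_compute.
  apply/forall_inP => u; rewrite G4 => hu; apply/forall_inP => v; rewrite G4 => hv.
  rewrite H7_adjE.
  by move/allP: A => /(_ u (mem_L7 u)) /allP /(_ v (mem_L7 v)); rewrite hu hv.
exists 4; split.
  split => //.
  - by apply/set0Pn; exists a1; rewrite G4.
  - by case=> [|[|[|[|k]]]] //= _; split => //; apply/set0Pn;
       [exists d; rewrite C1 | exists c1; rewrite C2 | exists b1; rewrite C3].
have -> : rev (iota 1 4) = [:: 4; 3; 2; 1] by [].
rewrite /= /Xk cl4 (negbTE N1) (negbTE N2) (negbTE N3).
have S4 : Gk H7_adj 4 = [set a1; a2] by apply/setP => u; rewrite G4 !inE !h7eqE; case: u.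
have S3 : corners H7_adj (Gk H7_adj 3) = [set b1; b2] by apply/setP => u; rewrite C3 !inE !h7eqE; case: u.
have S2 : corners H7_adj (Gk H7_adj 2) = [set c1; c2] by apply/setP => u; rewrite C2 !inE !h7eqE; case: u.
have S1 : corners H7_adj (Gk H7_adj 1) = [set d] by apply/setP => u; rewrite C1 !inE !h7eqE; case: u.
by rewrite S4 S3 S2 S1 !cards2 cards1 !h7eqE.
Qed.

Theorem lemma3p28 :
  rank_card_vector H7_adj [:: 2; 2; 2; 1] /\
  (forall (T : finType) (e : rel T),
      reflexive e -> symmetric e -> (0 < #|T|)%N ->
      rank_card_vector e [:: 2; 2; 2; 1] ->
      graph_iso e H7_adj).
Proof.
split; first exact: part1.
by move=> T e er es _; exact: part2.
Qed.
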